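(* Let $F_n$ be the Fibonacci numbers, $F_1=F_2=1$, $F_n=F_{n-1}+F_{n-2}$. For $n\ge 1$ put $$\omega_n=\frac{F_{n+2}^2F_{n+3}}{F_{n+1}^2F_n}$$ and consider the cubic equation $$t(2t-1)^2=(t-1)\,\omega_n,$$ whose roots are real and satisfy $G<0<G'<G''$. Then: (a) $G''$ is rational when $n$ is odd, and $G'$ is rational when $n$ is even; (b) this rational root equals $\dfrac{F_{n+3}}{2F_{n+1}}$.
   Context: Background (not needed for the algebraic statement): with $\phi_n=F_{n+1}/F_n$, the $n$-th Fibonacci pentagram has Gauss coordinates $(\alpha,\beta,\gamma,\delta,\epsilon)=(\phi_{n+1},\phi_{n+1},\phi_n,\phi_{n+2}\phi_{n+1}/\phi_n,\phi_n)$, which satisfy $1+\alpha=\gamma\delta$, $1+\beta=\delta\epsilon$, $1+\gamma=\epsilon\alpha$, $1+\delta=\alpha\beta$, $1+\epsilon=\beta\gamma$, and $\omega_n=\alpha\beta\gamma\delta\epsilon=\phi_n\phi_{n+1}^3\phi_{n+2}$. The cubic above is the characteristic equation for the eigenvalues $G,G',G''$ of the quadratic form whose null cone circumscribes the pentagram. *)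

(* Defs.v *)
From mathcomp Require Import all_boot all_order all_algebra.
Set Implicit Arguments. Unset Strict Implicit. Unset Printing Implicit Defensive.
Import Order.TTheory GRing.Theory Num.Theory.
Local Open Scope ring_scope.

Fixpoint fib (n : nat) : nat :=
  match n with
  | 0 => 0
  | 1 => 1
  | (m.+1 as k).+1 => fib k + fib m
  end.

Definition omega (R : realFieldType) (n : nat) : R :=
  ((fib n.+2)%:R ^+ 2 * (fib n.+3)%:R) / ((fib n.+1)%:R ^+ 2 * (fib n)%:R).

Definition cubic_eq (R : realFieldType) (n : nat) (t : R) : Prop :=
  t * (2 * t - 1) ^+ 2 = (t - 1) * omega R n.

Definition is_rational (R : realFieldType) (x : R) : Prop :=
  exists q : rat, x = ratr q.

(* Main.v *)
Require Import Defs.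
From mathcomp Require Import all_boot all_order all_algebra.
From mathcomp Require Import zify.
From mathcomp Require Import ring lra.
Import Order.TTheory GRing.Theory Num.Theory.
Local Open Scope ring_scope.

Lemma cubic_fact (R : rcfType) (w r G s t : R) : r != 0 ->
  r * (2 * r - 1) ^+ 2 = (r - 1) * w -> G + s = 1 - r -> 4 * r * G * s = - w ->
  t * (2 * t - 1) ^+ 2 - (t - 1) * w = 4 * (t - r) * (t - G) * (t - s).
Proof.
move=> rnz Hr Hsum Hprod.
have hs : s = 1 - r - G by rewrite -Hsum; ring.
subst s.
have E : 4 * G * (1 - r - G) - (1 - w - 4 * r * (1 - r)) = 0.
  apply: (mulfI rnz); rewrite mulr0.
  transitivity (4 * r * G * (1 - r - G) + w - (r * (2 * r - 1) ^+ 2 - (r - 1) * w)); first by ring.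
  by rewrite Hprod Hr subrr subr0 addNr.
apply/eqP; rewrite -subr_eq0; apply/eqP.
transitivity (- (t - r) * (4 * G * (1 - r - G) - (1 - w - 4 * r * (1 - r)))
   + (r * (2 * r - 1) ^+ 2 - (r - 1) * w)); first by ring.
by rewrite E Hr subrr mulr0 addr0.
Qed.

Lemma cassini n : (fib n.+3 * fib n + ~~ odd n = fib n.+2 * fib n.+1 + odd n)%N.
Proof.
elim: n => [//|n IH].
have e1 : fib n.+4 = (fib n.+3 + fib n.+2)%N by [].
have e2 : fib n.+3 = (fib n.+2 + fib n.+1)%N by [].
have e3 : fib n.+2 = (fib n.+1 + fib n)%N by [].
rewrite /= in IH *. move: IH. rewrite -/(fib n.+1) -/(fib n.+2) -/(fib n.+3) -/(fib n.+4) .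
rewrite e1 e2 e3. case: (odd n) => /=; nia.
Qed.

Lemma fib_pos n : (1 <= n)%N -> (0 < fib n)%N.
Proof.
elim: n => [//|n IH] _. case: n IH => [//|n] IH.
have -> : fib n.+2 = (fib n.+1 + fib n)%N by [].
have := IH isT. lia.
Qed.

Theorem theorem5p4 (R : rcfType) (n : nat) (hn : (1 <= n)%N) :
  exists G G' G'' : R,
    [/\ G < 0 /\ 0 < G' /\ G' < G'',
        (forall t : R, cubic_eq n t <-> t = G \/ t = G' \/ t = G''),
        (odd n -> is_rational G'' /\
                  G'' = (fib n.+3)%:R / (2 * (fib n.+1)%:R))
      & (~~ odd n -> is_rational G' /\
                  G' = (fib n.+3)%:R / (2 * (fib n.+1)%:R))].
Proof.
have cas := congr1 (fun m => m%:R : R) (cassini n).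
have hc0 : fib n.+2 = (fib n.+1 + fib n)%N by [].
have hd0 : fib n.+3 = (fib n.+2 + fib n.+1)%N by [].
have ha : (0 : R) < (fib n)%:R by rewrite ltr0n fib_pos.
have hb : (0 : R) < (fib n.+1)%:R by rewrite ltr0n fib_pos.
rewrite /= !natrD !natrM in cas.
rewrite /cubic_eq /omega.
have hc : (fib n.+2)%:R = (fib n.+1)%:R + (fib n)%:R :> R by rewrite hc0 natrD.
have hd : (fib n.+3)%:R = (fib n.+2)%:R + (fib n.+1)%:R :> R by rewrite hd0 natrD.
move: cas hc hd ha hb.
set a : R := (fib n)%:R. set b : R := (fib n.+1)%:R.
set c : R := (fib n.+2)%:R. set d : R := (fib n.+3)%:R.
move=> cas hc hd ha hb.
have hrat : is_rational (d / (2 * b)).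
  exists ((fib n.+3)%:R / (2 * (fib n.+1)%:R)).
  by rewrite fmorph_div rmorphM /= !rmorph_nat.
set w := c ^+ 2 * d / (b ^+ 2 * a).
set r := d / (2 * b).
have an0 : a != 0 by rewrite gt_eqF.
have bn0 : b != 0 by rewrite gt_eqF.
have hcp : 0 < c by rewrite hc; lra.
have hdp : 0 < d by rewrite hd; lra.
have wp : 0 < w by rewrite /w; apply: divr_gt0; [apply: mulr_gt0 => //; apply: exprn_gt0|
   apply: mulr_gt0 => //; apply: exprn_gt0].
have rp : 0 < r by rewrite /r; apply: divr_gt0 => //; lra.
have rn0 : r != 0 by rewrite gt_eqF.
have Hr : r * (2 * r - 1) ^+ 2 = (r - 1) * w.
  rewrite /r /w hd hc; field; rewrite ?an0 ?bn0 //=.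
set D := (1 - r) ^+ 2 + w / r.
have Dp : 0 < D by rewrite /D; apply: ltr_wpDl; [apply: sqr_ge0| apply: divr_gt0].
set sq := Num.sqrt D.
have sqp : 0 < sq by rewrite sqrtr_gt0.
have sq2 : sq ^+ 2 = D by rewrite sqr_sqrtr // ltW.
set G := (1 - r - sq) / 2.
set s := (1 - r + sq) / 2.
have Hsum : G + s = 1 - r by rewrite /G /s; field.
have Hprod : 4 * r * G * s = - w.
  transitivity (r * ((1 - r) ^+ 2 - sq ^+ 2)); first by rewrite /G /s; field.
  rewrite sq2 /D; field; exact: rn0.
have Gs : G < s by rewrite /G /s; lra.
have Gsn : G * s < 0.
  have : 4 * r * (G * s) < 0 by rewrite mulrA Hprod oppr_lt0.
  by rewrite pmulr_rlt0 //; apply: mulr_gt0 => //; lra.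
have Gn : G < 0.
  rewrite ltNge; apply/negP => G0.
  have : 0 <= G * s by apply: mulr_ge0 => //; lra.
  by rewrite leNgt Gsn.
have sp : 0 < s.
  rewrite ltNge; apply/negP => s0.
  have : 0 <= G * s by apply: mulr_le0 => //; lra.
  by rewrite leNgt Gsn.
have key : 4 * r * (r - G) * (r - s) = d * c * (d * a - c * b) / (b ^+ 3 * a).
  have hs : s = 1 - r - G by rewrite -Hsum; ring.
  transitivity (8 * r ^+ 3 - 4 * r ^+ 2 - w).
    rewrite -Hprod hs; ring.
  rewrite /r /w hd; field; rewrite ?an0 ?bn0 //=.
have fact (t : R) : t * (2 * t - 1) ^+ 2 = (t - 1) * w <-> t = r \/ t = G \/ t = s.
  transitivity (t * (2 * t - 1) ^+ 2 - (t - 1) * w = 0).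
    by split => [->|/subr0_eq //]; rewrite subrr.
  rewrite (@cubic_fact R w r G s t rn0 Hr Hsum Hprod).
  split.
    move/eqP; rewrite !mulf_eq0 !subr_eq0 /=.
    rewrite (negbTE (_ : 4 != 0 :> R)) ?pnatr_eq0 //=.
    by case/orP => [/orP[/eqP ->|/eqP ->]|/eqP ->]; tauto.
  by case=> [->|[->|->]]; rewrite !subrr ?mulr0 ?mul0r.
have rG : 0 < r - G by lra.
case ho : (odd n).
- exists G, s, r; split.
  + split => //; split => //.
    have : 0 < 4 * r * (r - G) * (r - s).
      rewrite key; rewrite ho /= in cas.
      have -> : d * a - c * b = 1 by lra.
      apply: divr_gt0; first by rewrite mulr1; apply: mulr_gt0.
      by apply: mulr_gt0 => //; apply: exprn_gt0.
    rewrite pmulr_rgt0; first by rewrite subr_gt0.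
    by apply: mulr_gt0 => //; lra.
  + move=> t; rewrite fact; tauto.
  + by [].
  + by [].
- exists G, r, s; split.
  + split => //; split => //.
    have : 4 * r * (r - G) * (r - s) < 0.
      rewrite key; rewrite ho /= in cas.
      have -> : d * a - c * b = -1 by lra.
      rewrite mulrN1 mulNr oppr_lt0.
      apply: divr_gt0; first by apply: mulr_gt0.
      by apply: mulr_gt0 => //; apply: exprn_gt0.
    rewrite pmulr_rlt0; first by rewrite subr_lt0.
    by apply: mulr_gt0 => //; lra.
  + move=> t; rewrite fact; tauto.
  + by [].
  + by [].
Qed.
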